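(* Let $s$ be a node and let $U$ be a nonempty set of neighbors of $s$ in the communication graph $G$ (the ''unexplored neighbors'' of $s$), and let $m=|U|$. Suppose procedure ESUN is run with $s$ as initiator, with only the nodes of $U$ transmitting during it. Then, for appropriately chosen constants $d$ and $\epsilon'$ in the procedure, the upper bound $x$ declared by $s$ satisfies $m\le x\le 16m$ with high probability.
   Context: Model: $n$ nodes in the Euclidean plane with unique names in $\{1,\dots,N\}$, $N\ge n$ ($N$ a power of 2); synchronous rounds, each node transmits or listens in each round, no collision detection. Uniform power $P$, parameters $\alpha>2$, $\mathcal{N}>0$, $\beta\ge1$, $\varepsilon\in(0,1)$, $r=(P/(\mathcal{N}\beta))^{1/\alpha}$. If set $\mathcal{T}$ transmits, $u\notin\mathcal{T}$ receives the message of $v\in\mathcal{T}$ iff $\frac{P\,\mathrm{dist}(v,u)^{-\alpha}}{\mathcal{N}+\sum_{w\in\mathcal{T}\setminus\{v\}}P\,\mathrm{dist}(w,u)^{-\alpha}}\ge\beta$ and $\mathrm{dist}(v,u)\le(1-\varepsilon)r$. Communication graph $G$: $u,v$ adjacent iff $\mathrm{dist}(u,v)\le(1-\varepsilon)r$. Procedure ESUN (Estimate the Size of the Unexplored Neighborhood), initiated by $s$: Stage 1 consists of $\log N$ sub-stages; in sub-stage $i$ ($i=1,\dots,\log N$), for $d\log N$ rounds, each node of $U$ independently transmits in each round with probability $1/2^i$, while $s$ listens; let $n_i$ be the number of rounds of sub-stage $i$ in which $s$ successfully receives a message. Stage 2: let $k$ be the largest $i$ with $n_i\ge \frac{d\log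 N}{8}(1-\epsilon')$; $s$ declares $x=2^k$ as an upper bound on the size of its unexplored neighborhood. ''With high probability'' means with probability at least $1-n^{-d''}$ for a sufficiently large constant $d''\ge1$. *)

(* Defs.v *)
From HB Require Import structures.
From mathcomp Require Import all_boot all_order all_algebra.
From mathcomp Require Import reals exp.
Set Implicit Arguments. Unset Strict Implicit. Unset Printing Implicit Defensive.
Import Order.TTheory GRing.Theory Num.Theory.
Local Open Scope ring_scope.

Definition dist (R : realType) (p q : R * R) : R :=
  Num.sqrt ((p.1 - q.1) ^+ 2 + (p.2 - q.2) ^+ 2).

Definition srange (R : realType) (alpha beta noise P : R) : R :=
  (P / (noise * beta)) `^ alpha^-1.

Definition sinr_receives (R : realType) (alpha beta noise P eps : R) (n : nat)
    (pos : 'I_n -> R * R) (T : {set 'I_n}) (v u : 'I_n) : bool :=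
  [&& v \in T, u \notin T,
      dist (pos v) (pos u) <= (1 - eps) * srange alpha beta noise P &
      beta <= (P * dist (pos v) (pos u) `^ (- alpha)) /
              (noise + \sum_(w in T | w != v) P * dist (pos w) (pos u) `^ (- alpha))].

Definition receives_some (R : realType) (alpha beta noise P eps : R) (n : nat)
    (pos : 'I_n -> R * R) (T : {set 'I_n}) (u : 'I_n) : bool :=
  [exists v, sinr_receives alpha beta noise P eps pos T v u].

Definition adjacent (R : realType) (alpha beta noise P eps : R) (n : nat)
    (pos : 'I_n -> R * R) (u v : 'I_n) : bool :=
  (u != v) && (dist (pos u) (pos v) <= (1 - eps) * srange alpha beta noise P).

(* Probability that exactly the set T transmits in one round, when every node of U
   transmits independently with probability p and nodes outside U never transmit. *)
Definition round_weight (R : realType) (n : nat) (U : {set 'I_n}) (p : R)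
    (T : {set 'I_n}) : R :=
  \prod_(v : 'I_n)
     (if v \in U then (if v \in T then p else 1 - p)
      else (if v \in T then 0 else 1)).

(* An execution of Stage 1 of ESUN: for sub-stage i (0-based index, i.e. sub-stage i+1)
   and round j, the set of transmitting nodes. *)
Definition esun_exec (n lN rounds : nat) :=
  {ffun 'I_lN * 'I_rounds -> {set 'I_n}}.

Definition esun_weight (R : realType) (n lN rounds : nat) (U : {set 'I_n})
    (w : esun_exec n lN rounds) : R :=
  \prod_(ij : 'I_lN * 'I_rounds) round_weight U ((2%:R ^+ ij.1.+1)^-1) (w ij).

Definition esun_count (R : realType) (alpha beta noise P eps : R) (n lN rounds : nat)
    (pos : 'I_n -> R * R) (s : 'I_n) (w : esun_exec n lN rounds) (i : 'I_lN) : nat :=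
  #|[set j : 'I_rounds | receives_some alpha beta noise P eps pos (w (i, j)) s]|.

(* k = the largest sub-stage index (1..log N) with n_k >= (d log N / 8)(1 - eps');
   by convention k = 0 if there is none. rounds = d * log N. *)
Definition esun_k (R : realType) (alpha beta noise P eps eps' : R) (n lN d : nat)
    (pos : 'I_n -> R * R) (s : 'I_n) (w : esun_exec n lN (d * lN)) : nat :=
  \max_(i < lN | (d * lN)%:R / 8 * (1 - eps') <=
                 (esun_count alpha beta noise P eps pos s w i)%:R :> R) i.+1.

Definition esun_x (R : realType) (alpha beta noise P eps eps' : R) (n lN d : nat)
    (pos : 'I_n -> R * R) (s : 'I_n) (w : esun_exec n lN (d * lN)) : nat :=
  2 ^ esun_k alpha beta noise P eps eps' pos s w.

(* Main.v *)
Require Import Defs.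
From HB Require Import structures.
From mathcomp Require Import all_boot all_order all_algebra.
From mathcomp Require Import reals exp.
From mathcomp Require sequences.
Notation expR := (@sequences.expR _).
From mathcomp Require Import ring lra zify.
Set Implicit Arguments. Unset Strict Implicit. Unset Printing Implicit Defensive.
Import Order.TTheory GRing.Theory Num.Theory.
Local Open Scope ring_scope.

Lemma sum_set_prod (R : realType) (n : nat) (F : 'I_n -> bool -> R) :
  \sum_(T : {set 'I_n}) \prod_(v : 'I_n) F v (v \in T) =
  \prod_(v : 'I_n) (F v true + F v false).
Proof.
have -> : \prod_(v : 'I_n) (F v true + F v false) = \prod_(v : 'I_n) \sum_(b : bool) F v b.
  by apply: eq_bigr => v _; rewrite big_bool.

rewrite bigA_distr_bigA /=.
rewrite (reindex (fun f : {ffun 'I_n -> bool} => [set v | f v])) /=.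
  by apply: eq_bigr => f _; apply: eq_bigr => v _; rewrite inE.
exists (fun T : {set 'I_n} => [ffun v => v \in T]) => f _.
  by apply/ffunP => v; rewrite ffunE inE.
by apply/setP => v; rewrite inE ffunE.
Qed.

Lemma rw_ge0 (R : realType) n (U : {set 'I_n}) (p : R) T :
  0 <= p <= 1 -> 0 <= round_weight U p T.
Proof.
move=> /andP[p0 p1]; apply: prodr_ge0 => v _.
case: (v \in U); case: (v \in T) => //; lra.
Qed.

Lemma rw_prodE (R : realType) n (U : {set 'I_n}) (p : R) T :
  round_weight U p T = \prod_(v : 'I_n)
     (fun v b => if v \in U then (if b then p else 1 - p) else (if b then 0 else 1)) v (v \in T).
Proof. by []. Qed.

Lemma rw_sum1 (R : realType) n (U : {set 'I_n}) (p : R) :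
  \sum_(T : {set 'I_n}) round_weight U p T = 1.
Proof.
rewrite /round_weight.
have := sum_set_prod (fun v b => if v \in U then (if b then p else 1 - p) else (if b then (0:R) else 1)).
move=> /= ->; rewrite big1 // => v _ /=; case: (v \in U) => //; lra.
Qed.

Lemma rw_mem (R : realType) n (U : {set 'I_n}) (p : R) v :
  \sum_(T : {set 'I_n}) round_weight U p T * (v \in T)%:R = (v \in U)%:R * p.
Proof.
have := sum_set_prod (fun u b => (if u \in U then (if b then p else 1 - p) else (if b then (0:R) else 1))
       * (if u == v then b%:R else 1)).
move=> /=; rewrite (eq_bigr (fun T => round_weight U p T * (v \in T)%:R)); last first.
  move=> T _; rewrite big_split /=; congr (_ * _).
  by rewrite -big_mkcond /= big_pred1_eq.
move=> ->; rewrite (bigD1 v) //= eqxx big1 /=.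
  by case: (v \in U); rewrite /= ?mulr1 ?mulr0 ?addr0 ?mul1r ?mul0r.
move=> u /negbTE ->; case: (u \in U); rewrite ?mulr1 /=; lra.
Qed.

Lemma rw_single (R : realType) n (U : {set 'I_n}) (p : R) v :
  v \in U -> round_weight U p [set v] = p * (1 - p) ^+ (#|U| - 1).
Proof.
move=> vU; rewrite /round_weight (bigD1 v) //= vU set11; congr (_ * _).
rewrite (bigID (fun u => u \in U)) /= [X in _ * X]big1 ?mulr1; last first.
  move=> u /andP[uv /negbTE uU]; rewrite uU inE (negbTE uv) //.
rewrite (eq_bigr (fun _ => 1 - p)); last first.
  by move=> u /andP[uv ->]; rewrite inE (negbTE uv).
rewrite prodr_const; congr (_ ^+ _).
rewrite (cardsD1 v U) vU add1n subn1 /=.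
by apply: eq_card => u; rewrite !inE.
Qed.

Lemma exec_mgf (R : realType) n lN M (U : {set 'I_n})
  (h : 'I_lN * 'I_M -> {set 'I_n} -> R) :
  \sum_(w : esun_exec n lN M) esun_weight R U w * \prod_(ij : 'I_lN * 'I_M) h ij (w ij) =
  \prod_(ij : 'I_lN * 'I_M) \sum_(T : {set 'I_n})
      round_weight U ((2%:R ^+ ij.1.+1)^-1) T * h ij T.
Proof.
rewrite bigA_distr_bigA /=; apply: eq_bigr => w _.
by rewrite /esun_weight -big_split.
Qed.

Lemma prod_row (R : realType) a b (i0 : 'I_a) (f : 'I_b -> R) :
  \prod_(ij : 'I_a * 'I_b) (if ij.1 == i0 then f ij.2 else 1) = \prod_(j : 'I_b) f j.
Proof.
rewrite -(pair_big xpredT xpredT (fun i j => if i == i0 then f j else 1)) /=.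
rewrite (bigD1 i0) //= eqxx [X in _ * X]big1 ?mulr1 // => i hi.
by rewrite big1 // => j _; rewrite (negbTE hi).
Qed.

Lemma exec_ge0 (R : realType) n lN M (U : {set 'I_n}) (w : esun_exec n lN M) :
  0 <= esun_weight R U w.
Proof.
apply: prodr_ge0 => ij _; apply: rw_ge0.
have h : 1 <= (2%:R ^+ ij.1.+1 : R) by rewrite exprn_ege1 // ler1n.
have h0 : (0 : R) < 2%:R ^+ ij.1.+1 by apply: lt_le_trans h.
by rewrite invr_ge0 (ltW h0) /= invf_le1.
Qed.

Lemma exec_total (R : realType) n lN M (U : {set 'I_n}) :
  \sum_(w : esun_exec n lN M) esun_weight R U w = 1.
Proof.
have E := @exec_mgf R n lN M U (fun _ _ => (1 : R)).
rewrite (eq_bigr (fun w => esun_weight R U w)) in E; last first.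
  by move=> w _; rewrite /= big1_eq mulr1.
rewrite E; apply: big1 => ij _.
by under eq_bigr do rewrite mulr1; rewrite rw_sum1.
Qed.

Lemma round_exp (R : realType) n (U : {set 'I_n}) (p t : R) (g : {set 'I_n} -> bool) :
  \sum_(T : {set 'I_n}) round_weight U p T * (if g T then t else 1) =
  1 + (t - 1) * \sum_(T : {set 'I_n} | g T) round_weight U p T.
Proof.
transitivity (\sum_(T : {set 'I_n}) round_weight U p T +
   (t - 1) * \sum_(T : {set 'I_n} | g T) round_weight U p T); last by rewrite rw_sum1.
rewrite [X in _ + (_ * X)]big_mkcond /= mulr_sumr -big_split /=.
by apply: eq_bigr => T _; case: (g T); rewrite ?mulr1 ?mulr0 ?addr0 //; ring.
Qed.

Lemma prod_cnt (R : realType) n lN M (g : {set 'I_n} -> bool) (t : R)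
  (w : esun_exec n lN M) (i0 : 'I_lN) :
  \prod_(ij : 'I_lN * 'I_M) (if ij.1 == i0 then (if g (w ij) then t else 1) else 1)
  = t ^+ #|[set j : 'I_M | g (w (i0, j))]|.
Proof.
transitivity (\prod_(ij : 'I_lN * 'I_M)
   (if ij.1 == i0 then (if g (w (i0, ij.2)) then t else 1) else 1)).
  by apply: eq_bigr => [[i j]] _ /=; case: eqP => // ->.
rewrite (prod_row i0 (fun j => if g (w (i0, j)) then t else 1)) -big_mkcond prodr_const; congr (_ ^+ _).
by apply: eq_card => j; rewrite inE.
Qed.

Lemma tail_gen (R : realType) n lN M (U : {set 'I_n}) (g : {set 'I_n} -> bool)
  (i0 : 'I_lN) (c : R) (K : nat) (Q : nat -> bool) :
  0 < c -> (forall k, Q k -> c ^+ K <= c ^+ k) ->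
  \sum_(w : esun_exec n lN M | Q #|[set j : 'I_M | g (w (i0, j))]|) esun_weight R U w <=
  (\sum_(T : {set 'I_n}) round_weight U ((2%:R ^+ i0.+1)^-1) T * (if g T then c else 1)) ^+ M
    / c ^+ K.
Proof.
move=> c0 HQ.
have cK0 : 0 < c ^+ K by apply: exprn_gt0.
apply: (@le_trans _ _ (\sum_(w : esun_exec n lN M) esun_weight R U w *
     (c ^+ #|[set j : 'I_M | g (w (i0, j))]| / c ^+ K))).
  rewrite big_mkcond /=; apply: ler_sum => w _.
  have W0 := exec_ge0 R U w.
  case: ifP => Qw.
    rewrite -[X in X <= _]mulr1 ler_wpM2l // ler_pdivlMr // mul1r.
    exact: HQ.
  by rewrite mulr_ge0 // divr_ge0 // ?exprn_ge0 // ltW.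
rewrite (eq_bigr (fun w => esun_weight R U w *
   \prod_(ij : 'I_lN * 'I_M) (fun ij T => if ij.1 == i0 then (if g T then c else 1) else 1) ij (w ij) / c ^+ K)); last first.
  by move=> w _; rewrite /= prod_cnt mulrA.
rewrite -mulr_suml (exec_mgf U (fun ij T => if ij.1 == i0 then (if g T then c else 1) else 1)) ler_pM2r ?invr_gt0 // le_eqVlt; apply/orP; left; apply/eqP.
transitivity (\prod_(ij : 'I_lN * 'I_M) (if ij.1 == i0 then
   \sum_(T : {set 'I_n}) round_weight U ((2%:R ^+ i0.+1)^-1) T * (if g T then c else 1) else 1)).
  apply: eq_bigr => [[i j]] _ /=; case: eqP => [-> //|_].
  by under eq_bigr do rewrite mulr1; rewrite rw_sum1.
by rewrite (prod_row i0 (fun _ => _)) prodr_const card_ord.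
Qed.

Lemma dist_sym (R : realType) (a b : R * R) : dist a b = dist b a.
Proof. by rewrite /dist; congr Num.sqrt; ring. Qed.

Lemma dist_gt0 (R : realType) (a b : R * R) : a != b -> 0 < dist a b.
Proof.
move=> ab; rewrite /dist sqrtr_gt0 lt_def addr_ge0 ?sqr_ge0 // andbT.
apply/negP => /eqP/eqP; rewrite paddr_eq0 ?sqr_ge0 // !sqrf_eq0 !subr_eq0.
move=> /andP[/eqP h1 /eqP h2]; move: ab; case: a b h1 h2 => a1 a2 [b1 b2] /= -> ->.
by rewrite eqxx.
Qed.

Lemma single_receives (R : realType) (alpha noise beta P eps : R) n
  (pos : 'I_n -> R * R) (s v : 'I_n) :
  2 < alpha -> 0 < noise -> 0 < P -> 1 <= beta -> 0 < eps -> eps < 1 ->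
  injective pos -> adjacent alpha beta noise P eps pos s v ->
  receives_some alpha beta noise P eps pos [set v] s.
Proof.
move=> Ha Hn HP Hb He0 He1 inj /andP[sv Hd].
apply/existsP; exists v; rewrite /sinr_receives set11 !inE sv /=.
rewrite dist_sym Hd /=.
rewrite big1 ?addr0; last by move=> w /andP[/set1P -> ]; rewrite eqxx.
set D := dist (pos s) (pos v).
have D0 : 0 < D.
  by apply: dist_gt0; apply/negP => /eqP /inj hsv; move: sv; rewrite hsv eqxx.
set X := P / (noise * beta).
have X0 : 0 < X by rewrite divr_gt0 // mulr_gt0 //; lra.
have Hr : srange alpha beta noise P `^ alpha = X.
  by rewrite /srange -powRrM mulVf ?powRr1 ?ltW //; apply/eqP => a0; lra.
have r0 : 0 <= srange alpha beta noise P by apply: powR_ge0.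
have DX : D `^ alpha <= X.
  rewrite -Hr; apply: ge0_ler_powR; rewrite ?nnegrE //; first lra.
  - exact: ltW.
  - apply: le_trans Hd _; rewrite ler_piMl //; lra.
have Da0 : 0 < D `^ alpha by apply: powR_gt0.
rewrite powRN -mulrA -invfM ler_pdivlMr ?mulr_gt0 // mulrC.
move: DX; rewrite /X ler_pdivlMr ?mulr_gt0 //; try lra.
Qed.

Lemma q_upper (R : realType) n (U : {set 'I_n}) (p : R) (g : {set 'I_n} -> bool) :
  0 <= p <= 1 -> (forall T, g T -> exists v, v \in T) ->
  \sum_(T : {set 'I_n} | g T) round_weight U p T <= #|U|%:R * p.
Proof.
move=> p01 Hg.
apply: (@le_trans _ _ (\sum_(T : {set 'I_n}) round_weight U p T *
                        \sum_(v : 'I_n) (v \in T)%:R)).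
  rewrite big_mkcond /=; apply: ler_sum => T _.
  have W0 := rw_ge0 U T p01.
  have S0 : 0 <= \sum_(v : 'I_n) ((v \in T)%:R : R) by apply: sumr_ge0 => v _.
  case: ifP => gT; last exact: mulr_ge0.
  rewrite -[X in X <= _]mulr1 ler_wpM2l //.
  have [v vT] := Hg T gT.
  by rewrite (bigD1 v) //= vT lerDl sumr_ge0.
under eq_bigr do rewrite mulr_sumr.
rewrite exchange_big /=.
under eq_bigr do rewrite rw_mem.
rewrite -mulr_suml; apply: ler_wpM2r; first by case/andP: p01.
rewrite le_eqVlt; apply/orP; left; apply/eqP.
rewrite (eq_bigr (fun v => if v \in U then 1 else 0)); last by move=> v _; case: (v \in U).
by rewrite -big_mkcond /= sumr_const.
Qed.

Lemma q_lower (R : realType) n (U : {set 'I_n}) (p : R) (g : {set 'I_n} -> bool) :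
  0 <= p <= 1 -> (forall v, v \in U -> g [set v]) ->
  #|U|%:R * (p * (1 - p) ^+ (#|U| - 1)) <= \sum_(T : {set 'I_n} | g T) round_weight U p T.
Proof.
move=> p01 Hg.
have -> : #|U|%:R * (p * (1 - p) ^+ (#|U| - 1)) = \sum_(v in U) round_weight U p [set v].
  rewrite (eq_bigr (fun _ => p * (1 - p) ^+ (#|U| - 1))); last by move=> v vU; rewrite rw_single.
  by rewrite sumr_const mulr_natl.
rewrite -(big_imset (fun T => round_weight U p T)) /=; last by move=> x y _ _; apply: set1_inj.
rewrite [X in X <= _]big_mkcond [X in _ <= X]big_mkcond /=; apply: ler_sum => T _.
case: ifP => [/imsetP [v vU ->]|_]; first by rewrite Hg.
by case: ifP => // _; apply: rw_ge0.
Qed.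

Lemma expRm1 (R : realType) : 8 / 27 <= expR (-1 : R).
Proof.
have -> : (-1 : R) = 3%:R * (- 3^-1) by field.
rewrite expRM_natl.
have h : 2 / 3 <= expR (- 3^-1 : R) by apply: le_trans (expR_ge1Dx _); lra.
have -> : (8 / 27 : R) = (2 / 3) ^+ 3 by field.
by apply: lerXn2r; rewrite ?nnegrE ?expR_ge0 //; lra.
Qed.

Lemma one_minus_p (R : realType) (p : R) : 0 <= p < 1 -> expR (- (p / (1 - p))) <= 1 - p.
Proof.
move=> /andP[p0 p1].
have q0 : 0 < 1 - p by lra.
have h := expR_ge1Dx (p / (1 - p)).
have e : 1 + p / (1 - p) = (1 - p)^-1 by field; lra.
rewrite e in h.
rewrite expRN -[X in _ <= X]invrK lef_pV2 ?posrE ?expR_gt0 ?invr_gt0 //.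
Qed.

Lemma lower_const (R : realType) (m : nat) (p : R) :
  (0 < m)%N -> 0 <= p <= 1 / 2 -> 1 / 2 <= m%:R * p <= 1 ->
  4 / 27 <= m%:R * (p * (1 - p) ^+ (m - 1)).
Proof.
move=> m0 /andP[p0 p1] /andP[mp1 mp2].
have q0 : 0 < 1 - p by lra.
have key : expR (-1) <= (1 - p) ^+ (m - 1).
  apply: (@le_trans _ _ (expR (- (p / (1 - p))) ^+ (m - 1))); last first.
    by apply: lerXn2r; rewrite ?nnegrE ?expR_ge0 ?one_minus_p //; lra.
  rewrite -expRM_natl ler_expR natrB // mulrN lerN2.
  rewrite mulrA ler_pdivrMr // mul1r mulrBl mul1r; lra.
have e := expRm1 R.
rewrite mulrA.
have h1 : 0 <= m%:R * p by lra.
apply: (@le_trans _ _ (1 / 2 * expR (-1))); first lra.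
by apply: ler_pM => //; [lra | apply: expR_ge0].
Qed.

Lemma bern (R : realType) (x : R) n : 0 <= x -> 1 + n%:R * x <= (1 + x) ^+ n.
Proof.
move=> x0; elim: n => [|n IH]; first by rewrite mul0r addr0 expr0.
rewrite exprS -natr1.
have h : 0 <= n%:R * x by rewrite mulr_ge0.
apply: (@le_trans _ _ ((1 + x) * (1 + n%:R * x))); last by rewrite ler_wpM2l //; lra.
have : 0 <= x * (n%:R * x) by rewrite mulr_ge0.
nra.
Qed.

Lemma tail_num (R : realType) (E c a : R) K :
  0 < c -> 0 <= E <= a -> a ^+ 12 / c <= 97 / 100 ->
  E ^+ (12 * K) / c ^+ K <= (97 / 100) ^+ K.
Proof.
move=> c0 /andP[E0 Ea] h.
rewrite exprM -expr_div_n; apply: lerXn2r; rewrite ?nnegrE; try lra.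
  by rewrite divr_ge0 ?exprn_ge0 // ltW.
apply: le_trans h; rewrite ler_pM2r ?invr_gt0 //.
by apply: lerXn2r; rewrite ?nnegrE //; lra.
Qed.

Lemma num_up (R : realType) : (33 / 32 : R) ^+ 12 / (3 / 2) <= 97 / 100.
Proof. rewrite !exprS expr0; lra. Qed.

Lemma num_low (R : realType) : (25 / 27 : R) ^+ 12 / (1 / 2) <= 97 / 100.
Proof. rewrite !exprS expr0; lra. Qed.

Lemma thr_eq (R : realType) d0 lN :
  ((12 * d0 * lN)%:R / 8 * (1 - 1 / 3) : R) = (d0 * lN)%:R.
Proof. by rewrite -mulnA natrM; field. Qed.

Lemma esun_good (R : realType) (alpha beta noise P eps : R) n lN d0 (pos : 'I_n -> R * R)
  (s : 'I_n) (w : esun_exec n lN (12 * d0 * lN)) (m : nat) (io : 'I_lN) :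
  (m <= 2 ^ io.+1)%N -> (0 < m)%N ->
  (d0 * lN <= esun_count alpha beta noise P eps pos s w io)%N ->
  (forall i : 'I_lN, (16 * m < 2 ^ i.+1)%N ->
       (esun_count alpha beta noise P eps pos s w i < d0 * lN)%N) ->
  (m <= esun_x alpha beta noise P eps (1 / 3) pos s w <= 16 * m)%N.
Proof.
move=> mio m0 Hlow Hup.
rewrite /esun_x /esun_k thr_eq.
apply/andP; split.
  apply: (leq_trans mio); rewrite leq_exp2l //.
  by apply: (leq_bigmax_cond (F := fun i : 'I_lN => i.+1)); rewrite ler_nat.
apply: (big_ind (fun k => 2 ^ k <= 16 * m)%N).
- by rewrite expn0; lia.
- by move=> x y hx hy; rewrite /maxn; case: ifP.
- move=> i; rewrite ler_nat => hi.
  rewrite leqNgt; apply/negP => /Hup; rewrite ltnNge hi //.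
Qed.

Lemma choose_d0 (R : realType) (B : R) : 0 < B ->
  exists d0 : nat, (0 < d0)%N /\ (97 / 100 : R) ^+ d0 * B <= 1.
Proof.
move=> B0.
have h := truncnS_gt (97 * B / 3).
move: (Num.trunc _).+1 h => k hk.
have k0 : (0 < k)%N.
  rewrite lt0n; apply/negP => /eqP k0; move: hk; rewrite k0.
  have : 0 < 97 * B / 3 by rewrite divr_gt0 // mulr_gt0.
  lra.
exists k; split => //.
have h1 : B <= (100 / 97 : R) ^+ k.
  have e : (100 / 97 : R) = 1 + 3 / 97 by field.
  rewrite e; apply: le_trans (bern _ _); last lra.
  lra.
apply: (@le_trans _ _ ((97 / 100) ^+ k * (100 / 97) ^+ k)).
  by rewrite ler_wpM2l // exprn_ge0 //; lra.
rewrite -exprMn.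
have e : (97 / 100 * (100 / 97) : R) = 1 by field.
by rewrite e expr1n.
Qed.

Unset Implicit Arguments.

Theorem lemma1 (R : realType) (alpha noise beta P eps : R)
  (Halpha : 2 < alpha) (Hnoise : 0 < noise) (HP : 0 < P) (Hbeta : 1 <= beta)
  (Heps0 : 0 < eps) (Heps1 : eps < 1)
  (d'' : R) (Hd'' : 1 <= d'') :
  exists (d : nat) (eps' : R), (0 < d)%N /\ 0 < eps' < 1 /\
  forall (n lN : nat) (pos : 'I_n -> R * R) (s : 'I_n) (U : {set 'I_n}),
    injective pos ->
    (n <= 2 ^ lN)%N ->
    U != set0 ->
    (forall u, u \in U -> adjacent alpha beta noise P eps pos s u) ->
    1 - (n%:R : R) `^ (- d'') <=
      \sum_(w : esun_exec n lN (d * lN) |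
              (#|U| <= esun_x alpha beta noise P eps eps' pos s w <= 16 * #|U|)%N)
        esun_weight R U w.
Proof.
have B0 : (0 : R) < 2 * 2 `^ d'' by rewrite mulr_gt0 // powR_gt0.
have [d0 [d0pos Hd0]] := choose_d0 B0.
exists (12 * d0)%N, (1 / 3).
split; first by rewrite muln_gt0.
split; first by apply/andP; split; lra.
move=> n lN pos s U inj HnN HU Hadj.
have m0 : (0 < #|U|)%N by rewrite card_gt0.
have Un : (#|U| <= n)%N by apply: leq_trans (max_card _) _; rewrite card_ord.
have sum_ge0 : 0 <= \sum_(w : esun_exec n lN (12 * d0 * lN) |
              (#|U| <= esun_x alpha beta noise P eps (1 / 3) pos s w <= 16 * #|U|)%N)
        esun_weight R U w by apply: sumr_ge0 => w _; apply: exec_ge0.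
case: (leqP n 1) => Hn1.
  have n1 : n = 1%N by apply/eqP; rewrite eqn_leq Hn1 (leq_trans m0 Un).
  have -> : (n%:R : R) `^ (- d'') = 1 by rewrite n1 powR1.
  by rewrite subrr.
have lN0 : (0 < lN)%N.
  rewrite lt0n; apply/negP => /eqP l0; move: HnN; rewrite l0 expn0 => HnN; by rewrite ltnNge HnN in Hn1.
set m := #|U|.
set K := (d0 * lN)%N.
pose g := fun T => receives_some alpha beta noise P eps pos T s.
have exi : exists i, (m <= 2 ^ i.+1)%N.
  by exists lN.-1; rewrite prednK //; apply: leq_trans Un HnN.
case: (ex_minnP exi) => i0 Hi0 Hmin.
have i0lt : (i0 < lN)%N.
  have := Hmin lN.-1; rewrite prednK // => /(_ (leq_trans Un HnN)) h; by rewrite -(prednK lN0) ltnS.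
have Hi0up : (2 ^ i0.+1 <= 2 * m)%N.
  move: Hi0 Hmin; case: i0 {i0lt} => [|j] Hi0 Hmin; first by rewrite expn1 leq_pmulr.
  have : ~~ (m <= 2 ^ j.+1)%N by apply/negP => /Hmin; rewrite ltnn.
  rewrite -ltnNge => h; by rewrite expnS leq_mul2l (ltnW h) orbT.
pose io := Ordinal i0lt.
have X0 : forall i : nat, (0 : R) < 2%:R ^+ i by move=> i; apply: exprn_gt0.
have X2 : forall i : nat, (2 : R) <= 2%:R ^+ i.+1.
  move=> i; rewrite -natrX ler_nat expnS; apply: leq_pmulr; exact: expn_gt0.
have p01 : forall i : nat, 0 <= ((2%:R ^+ i.+1)^-1 : R) <= 1.
  move=> i; rewrite invr_ge0 (ltW (X0 _)) /= invf_le1 //.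
  by apply: le_trans (X2 i); lra.
have gv : forall T, g T -> exists v, v \in T.
  by move=> T /existsP [v /and4P [vT _ _ _]]; exists v.
have gs : forall v, v \in U -> g [set v].
  by move=> v vU; apply: single_receives => //; apply: Hadj.
have low : \sum_(w : esun_exec n lN (12 * d0 * lN) |
      (esun_count alpha beta noise P eps pos s w io < K)%N) esun_weight R U w
      <= (97 / 100) ^+ K.
  have Hq : 4 / 27 <= \sum_(T : {set 'I_n} | g T) round_weight U ((2%:R ^+ io.+1)^-1 : R) T.
    apply: le_trans _ (q_lower (U := U) (p01 io) gs).
    have hX := X0 io.+1.
    apply: lower_const => //; apply/andP; split.
    - by rewrite invr_ge0 ltW.
    - rewrite -[X in X <= _]mul1r ler_pdivrMr //; have := X2 io; lra.
    - have h : (2%:R ^+ io.+1 : R) <= 2 * m%:R.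
        by rewrite -natrX -(natrM R 2 m) ler_nat.
      rewrite ler_pdivlMr //; lra.
    - have h : (m%:R : R) <= 2%:R ^+ io.+1 by rewrite -natrX ler_nat.
      rewrite ler_pdivrMr //; lra.
  apply: le_trans (@tail_gen R n lN (12 * d0 * lN) U g io (1 / 2) K (fun k => (k < K)%N) _ _) _.
  - lra.
  - by move=> k hk; apply: ler_wiXn2l; [lra | lra | exact: ltnW].
  rewrite -mulnA; apply: (tail_num (a := 25 / 27)); first lra; last exact: num_low.
  apply/andP; split.
    by apply: sumr_ge0 => T _; apply: mulr_ge0; [apply: rw_ge0 | case: (g T); lra].
  rewrite round_exp; lra.
have up : forall i : 'I_lN, (16 * m < 2 ^ i.+1)%N ->
   \sum_(w : esun_exec n lN (12 * d0 * lN) |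
      (K <= esun_count alpha beta noise P eps pos s w i)%N) esun_weight R U w
      <= (97 / 100) ^+ K.
  move=> i hi.
  have Hq : \sum_(T : {set 'I_n} | g T) round_weight U ((2%:R ^+ i.+1)^-1 : R) T <= 1 / 16.
    apply: le_trans (q_upper U (p01 i) gv) _.
    have hX := X0 i.+1.
    have h : (16 * m%:R : R) <= 2%:R ^+ i.+1.
      by rewrite -natrX -(natrM R 16 m) ler_nat ltnW.
    rewrite -/m ler_pdivrMr //; lra.
  have Hq0 : 0 <= \sum_(T : {set 'I_n} | g T) round_weight U ((2%:R ^+ i.+1)^-1 : R) T.
    by apply: sumr_ge0 => T _; apply: rw_ge0.
  apply: le_trans (@tail_gen R n lN (12 * d0 * lN) U g i (3 / 2) K (fun k => (K <= k)%N) _ _) _.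
  - lra.
  - by move=> k hk; apply: ler_weXn2l; [lra | exact: hk].
  rewrite -mulnA; apply: (tail_num (a := 33 / 32)); first lra; last exact: num_up.
  rewrite round_exp; apply/andP; split; lra.
have tot := @exec_total R n lN (12 * d0 * lN) U.
rewrite (bigID (fun w => (m <= esun_x alpha beta noise P eps (1 / 3) pos s w <= 16 * m)%N)) /= in tot.
have bad : \sum_(w : esun_exec n lN (12 * d0 * lN) |
      ~~ (m <= esun_x alpha beta noise P eps (1 / 3) pos s w <= 16 * m)%N) esun_weight R U w
      <= (1 + lN%:R) * (97 / 100) ^+ K.
  apply: (@le_trans _ _ (\sum_(w : esun_exec n lN (12 * d0 * lN) |
      (esun_count alpha beta noise P eps pos s w io < K)%N) esun_weight R U w +
      \sum_(i : 'I_lN | (16 * m < 2 ^ i.+1)%N) \sum_(w : esun_exec n lN (12 * d0 * lN) |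
      (K <= esun_count alpha beta noise P eps pos s w i)%N) esun_weight R U w)); last first.
    rewrite mulrDl mul1r; apply: lerD => //.
    apply: (@le_trans _ _ (\sum_(i : 'I_lN) (97 / 100 : R) ^+ K)); last first.
      by rewrite sumr_const card_ord [X in _ <= X]mulr_natl.
    rewrite [X in _ <= X](bigID (fun i : 'I_lN => (16 * m < 2 ^ i.+1)%N)) /=.
    rewrite -[X in X <= _]addr0; apply: lerD.
      by apply: ler_sum => i hi; apply: up.
    by apply: sumr_ge0 => i _; apply: exprn_ge0; lra.
  rewrite [X in _ <= _ + X](eq_bigr (fun i => \sum_(w : esun_exec n lN (12 * d0 * lN))
     (if (K <= esun_count alpha beta noise P eps pos s w i)%N then esun_weight R U w else 0)));
     last by move=> i _; rewrite big_mkcond.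
  rewrite exchange_big /= [X in _ <= X + _]big_mkcond -big_split /= [X in X <= _]big_mkcond /=.
  apply: ler_sum => w _.
  have W0 := exec_ge0 R U w.
  have S0 : 0 <= \sum_(i : 'I_lN | (16 * m < 2 ^ i.+1)%N)
     (if (K <= esun_count alpha beta noise P eps pos s w i)%N then esun_weight R U w else 0).
    by apply: sumr_ge0 => i _; case: ifP.
  case: ifP => gw; last by apply: addr_ge0 => //; case: ifP.
  case: (ltnP (esun_count alpha beta noise P eps pos s w io) K) => hl.
    by rewrite lerDl.
  rewrite add0r.
  case: (pickP (fun i : 'I_lN => (16 * m < 2 ^ i.+1)%N &&
          (K <= esun_count alpha beta noise P eps pos s w i)%N)) => [i /andP[ci ui] | none].
    by rewrite (bigD1 i) //= ui lerDl; apply: sumr_ge0 => j _; case: ifP.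
  exfalso; move/negP: gw; apply; apply: (esun_good (m := m) (io := io)) => //.
  move=> i ci; have := none i; rewrite /= ci /= => /negbT; rewrite -ltnNge.
  done.
have fin : (1 + lN%:R) * (97 / 100) ^+ K <= (n%:R : R) `^ (- d'').
  set Y := (2 : R) `^ d''.
  have Y0 : 0 < Y by apply: powR_gt0.
  have rd0 : (0 : R) <= (97 / 100) ^+ d0 by apply: exprn_ge0; lra.
  have h1 : (1 + lN%:R : R) <= 2 ^+ lN.
    have := ltn_expl lN (isT : (1 < 2)%N); rewrite -(ler_nat R) natrX => h.
    by rewrite -natr1 addrC in h.
  have n0 : (0 : R) < n%:R by rewrite ltr0n; apply: leq_trans Hn1.
  have h2 : (n%:R : R) `^ d'' <= Y ^+ lN.
    have -> : Y ^+ lN = (2 ^+ lN) `^ d''.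
      rewrite -(@powR_mulrn R Y lN (ltW Y0)).
      rewrite -(@powR_mulrn R 2 lN (ler0n R 2)).
      by rewrite /Y powRAC.
    apply: ge0_ler_powR; rewrite ?nnegrE ?exprn_ge0 //; try lra.
    by rewrite -natrX ler_nat.
  have nd0 : 0 < (n%:R : R) `^ d'' by apply: powR_gt0.
  rewrite powRN.
  apply: (@le_trans _ _ ((Y ^+ lN)^-1)); last first.
    by rewrite lef_pV2 ?posrE // exprn_gt0.
  rewrite /K exprM.
  apply: (@le_trans _ _ (2 ^+ lN * ((97 / 100) ^+ d0) ^+ lN)).
    by rewrite ler_wpM2r // exprn_ge0.
  rewrite -[X in _ <= X]mul1r.
  rewrite ler_pdivlMr; last by apply: exprn_gt0.
  rewrite -!exprMn.
  apply: exprn_ile1.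
    exact: (mulr_ge0 (mulr_ge0 (ler0n R 2) rd0) (ltW Y0)).
  rewrite mulrAC mulrC; exact: Hd0.
lra.
Qed.
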